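(* Let $d\ge 4$ and let $G=\mathrm{GL}_d(2)$ act naturally on the set of $2$-dimensional subspaces of $\mathbb{F}_2^d$. Then $G$ is not $\mathrm{IBIS}$.
   Context: A base of a permutation group $G$ on $\Omega$ is a sequence $(\omega_1,\dots,\omega_\ell)$ of points with trivial pointwise stabilizer; it is irredundant if $G>G_{\omega_1}>\cdots>G_{\omega_1,\dots,\omega_\ell}=1$. $G$ is $\mathrm{IBIS}$ if all irredundant bases of $G$ have the same cardinality. *)

(* Defs.v *)
From HB Require Import structures.
From mathcomp Require Import all_boot all_order all_algebra all_fingroup.
Set Implicit Arguments. Unset Strict Implicit. Unset Printing Implicit Defensive.
Import GRing.Theory.
Local Open Scope group_scope.

Section IBIS.
Variables (aT : finGroupType) (D : {set aT}) (T : finType) (to : action D T).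

Definition pstab (G : {set aT}) (s : seq T) : {set aT} :=
  'C_G([set x in s] | to).

Definition irredundant_base (G : {set aT}) (Omega : {set T}) (s : seq T) :=
  [&& all (mem Omega) s,
      [forall i : 'I_(size s), pstab G (take i.+1 s) \proper pstab G (take i s)]
    & pstab G s == 1].

Definition IBIS (G : {set aT}) (Omega : {set T}) : Prop :=
  forall s t : seq T, irredundant_base G Omega s -> irredundant_base G Omega t ->
    size s = size t.
End IBIS.

Section GLact.
Variables (F : finFieldType) (n : nat).
Local Notation d := n.+1.

Definition GL_vec_act (v : 'rV[F]_d) (g : {'GL_d[F]}) : 'rV[F]_d := v *m GLval g.

Fact GL_vec_is_action : is_action [set: {'GL_d[F]}] GL_vec_act.
Proof.
apply: is_total_action => [v | v g h]; rewrite /GL_vec_act.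
  by rewrite GL_1E mulmx1.
by rewrite GL_ME mulmxA.
Qed.
Canonical GL_vec_action := Action GL_vec_is_action.

Definition GL_set_action := (GL_vec_action^*)%act.

Definition rowspace m (A : 'M[F]_(m, d)) : {set 'rV[F]_d} :=
  [set v : 'rV[F]_d | (v <= A)%MS].

Definition subspaces2 : {set {set 'rV[F]_d}} :=
  [set rowspace A | A in [pred A : 'M[F]_(2, d) | \rank A == 2]].
End GLact.

(* Main.v *)
Require Import Defs.
From mathcomp Require Import all_boot all_order all_algebra all_fingroup.
From mathcomp Require Import zify.
Import GRing.Theory.
Set Implicit Arguments. Unset Strict Implicit. Unset Printing Implicit Defensive.
Local Open Scope group_scope.

Section Prune.
Variables (aT : finGroupType) (D : {set aT}) (T : finType) (to : action D T).
Variables (G : {set aT}) (Omega : {set T}).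
Local Notation ps := (pstab to G).

Lemma pstabE s g : (g \in ps s) = [&& g \in G, g \in D & all (fun x => to x g == x) s].
Proof.
rewrite /pstab /astab !inE; congr (_ && (_ && _)).
apply/subsetP/allP => H x; first by move=> xs; have := H x; rewrite !inE; apply.
by rewrite !inE => /H.
Qed.

Lemma pstab_cat s t : ps (s ++ t) = ps s :&: ps t.
Proof.
apply/setP => g; rewrite in_setI !pstabE all_cat.
by case: (g \in G); case: (g \in D); case: (all _ s).
Qed.

Lemma pstab_sub s t : {subset s <= t} -> ps t \subset ps s.
Proof.
move=> st; apply/subsetP => g; rewrite !pstabE => /and3P[-> -> /allP H] /=.
by apply/allP => x /st /H.
Qed.

Definition irr_chain (s : seq T) :=
  forall i, i < size s -> ps (take i.+1 s) \proper ps (take i s).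

Fixpoint prune (acc s : seq T) : seq T :=
  if s is x :: s' then
    if ps (rcons acc x) \proper ps acc then prune (rcons acc x) s' else prune acc s'
  else acc.

Lemma prune_spec s : forall acc, irr_chain acc -> all (mem Omega) acc -> all (mem Omega) s ->
  [/\ irr_chain (prune acc s), all (mem Omega) (prune acc s),
      ps (prune acc s) = ps (acc ++ s) & size (prune acc s) <= size acc + size s].
Proof.
elim: s => [|x s IH] acc Hc Ha /=; first by rewrite cats0 addn0.
case/andP => Hx Hs.
have E : ps (acc ++ x :: s) = ps (rcons acc x) :&: ps s.
  by rewrite -cat1s catA cats1 pstab_cat.
case: ifP => Hp.
  have Hc' : irr_chain (rcons acc x).
    move=> i; rewrite size_rcons ltnS leq_eqVlt => /orP[/eqP ->|lti].
      by rewrite take_oversize ?size_rcons // -cats1 (take_size_cat _ (erefl _)) cats1.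
    rewrite -cats1 !takel_cat //; first exact: Hc.
    exact: ltnW.
  have Ha' : all (mem Omega) (rcons acc x) by rewrite -cats1 all_cat Ha /= Hx.
  have [h1 h2 h3 h4] := IH _ Hc' Ha' Hs.
  split=> //; first by rewrite h3 E -cats1 pstab_cat.
  by rewrite (leq_trans h4) // size_rcons addSn addnS.
have [h1 h2 h3 h4] := IH _ Hc Ha Hs.
split=> //; last by rewrite (leq_trans h4) // addnS.
have sub : ps (rcons acc x) \subset ps acc.
  by apply: pstab_sub => y; rewrite -cats1 mem_cat => ->.
have eq1 : ps (rcons acc x) = ps acc.
  apply/eqP; rewrite eqEsubset sub /=.
  by move: Hp; rewrite properE sub /= => /negbFE.
by rewrite h3 E eq1 pstab_cat.
Qed.

Lemma prune_base s : all (mem Omega) s -> ps s = 1 ->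
  exists t, irredundant_base to G Omega t /\ size t <= size s.
Proof.
move=> Hs H1.
have [h1 h2 h3 h4] := @prune_spec s [::] (fun i (hi : i < 0) => False_ind _ (notF hi)) isT Hs.
exists (prune [::] s); split=> //.
apply/and3P; split=> //; last by rewrite h3 H1.
by apply/forallP => i; apply: h1.
Qed.

Lemma irr_of_chain s : all (mem Omega) s -> irr_chain s -> ps s = 1 ->
  irredundant_base to G Omega s.
Proof.
move=> Ha Hc H1; apply/and3P; split=> //; last by rewrite H1.
by apply/forallP => i; apply: Hc.
Qed.
End Prune.
Section Conc.
Variable n : nat.
Local Notation d := n.+1.
Local Notation F := 'F_2.
Local Open Scope ring_scope.

Lemma F2_cases (c : F) : c = 0 \/ c = 1.
Proof. case: c => [[|[|m]] Hc].
- by left; apply/val_inj.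
- by right; apply/val_inj.
- by [].
Qed.

Lemma F2_add_self (c : F) : c + c = 0.
Proof. by case: (F2_cases c) => ->; [rewrite addr0 | apply/val_inj]. Qed.

Lemma F2_1n0 : (1 : F) != 0. Proof. by []. Qed.

Definition e (i : 'I_d) : 'rV[F]_d := delta_mx 0 i.
Definition sp2 (a b : 'rV[F]_d) : {set 'rV[F]_d} := [set 0; a; b; a + b].

Lemma eE i k : e i 0 k = (i == k)%:R.
Proof. by rewrite /e mxE eqxx /= eq_sym. Qed.

Lemma in_sp2 a b v : (v \in sp2 a b) = [|| v == 0, v == a, v == b | v == a + b].
Proof. by rewrite /sp2 !inE -!orbA. Qed.

Lemma sp2C a b : sp2 a b = sp2 b a.
Proof. by apply/setP => v; rewrite !in_sp2 addrC; case: (v == 0); case: (v == a); case: (v == b). Qed.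

Lemma rowspace_col (a b : 'rV[F]_d) : rowspace (col_mx a b) = sp2 a b.
Proof.
apply/setP => v; rewrite /rowspace inE in_sp2 -addsmxE.
apply/sub_addsmxP/idP.
  case=> [[u1 u2]] /= ->; rewrite [u1]mx11_scalar [u2]mx11_scalar !mul_scalar_mx.
  by case: (F2_cases (u1 0 0)) => ->; case: (F2_cases (u2 0 0)) => ->;
    rewrite ?scale0r ?scale1r ?add0r ?addr0 eqxx ?orbT.
case/or4P => /eqP ->.
- by exists (0, 0); rewrite !mul0mx addr0.
- by exists (1%:M, 0); rewrite mul1mx mul0mx addr0.
- by exists (0, 1%:M); rewrite mul1mx mul0mx add0r.
- by exists (1%:M, 1%:M); rewrite !mul1mx.
Qed.

Lemma delta00 : (delta_mx 0 0 : 'M[F]_1) = 1%:M.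
Proof. by apply/matrixP => [[[|//] ?] [[|//] ?]]; rewrite !mxE. Qed.

Lemma sp2_in (i j : 'I_d) : i != j -> sp2 (e i) (e j) \in subspaces2 F n.
Proof.
move=> ij; rewrite -rowspace_col; apply/imsetP.
exists (col_mx (e i) (e j)) => //; rewrite inE /=.
have H : col_mx (e i) (e j) *m row_mx (e i)^T (e j)^T = 1%:M.
  rewrite mul_col_row /e !trmx_delta !mul_delta_mx !mul_delta_mx_0 // 1?eq_sym //.
  by rewrite delta00 -scalar_mx_block.
rewrite eqn_leq rank_leq_row /=.
have := mxrankM_maxl (col_mx (e i) (e j)) (row_mx (e i)^T (e j)^T).
by rewrite H mxrank1.
Qed.

Local Notation act := (GL_set_action F n).

Lemma vactE v (g : {'GL_d[F]}) : GL_vec_action F n v g = v *m GLval g.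
Proof. by []. Qed.

Lemma act_sp2 (g : {'GL_d[F]}) a b :
  act (sp2 a b) g = sp2 (a *m GLval g) (b *m GLval g).
Proof.
rewrite /GL_set_action /= /setact; apply/setP => w; rewrite in_sp2.
apply/imsetP/idP.
  case=> v; rewrite in_sp2 => /or4P[] /eqP -> ->; rewrite vactE ?mulmxDl ?mul0mx eqxx ?orbT //.
case/or4P => /eqP ->.
- by exists 0; rewrite ?in_sp2 ?eqxx // vactE mul0mx.
- by exists a; rewrite ?in_sp2 ?eqxx ?orbT.
- by exists b; rewrite ?in_sp2 ?eqxx ?orbT.
- by exists (a + b); rewrite ?in_sp2 ?eqxx ?orbT // vactE mulmxDl.
Qed.

Lemma addvv m k (v : 'M[F]_(m, k)) : v + v = 0.
Proof. by apply/matrixP => x y; rewrite !mxE F2_add_self. Qed.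

Definition tv (i j : 'I_d) : 'M[F]_d := 1%:M + delta_mx i j.

Lemma tv_unit i j : i != j -> tv i j \is a GRing.unit.
Proof.
move=> ij; have [] := @mulmx1_unit _ _ (tv i j) (tv i j) => //.
rewrite /tv mulmxDl !mulmxDr !mul1mx mulmx1 mul_delta_mx_0 1?eq_sym // addr0.
by rewrite -addrA addvv addr0.
Qed.

Definition tvG (i j : 'I_d) : {'GL_d[F]} := insubd (1%g : {'GL_d[F]}) (tv i j : 'M[F]_(d.-1.+1)).

Lemma tvGE i j : i != j -> GLval (tvG i j) = tv i j.
Proof. by move=> ij; rewrite /tvG insubdK //; apply: tv_unit. Qed.

Lemma e_tv k i j : e k *m tv i j = e k + e j *+ (k == i).
Proof. by rewrite /tv mulmxDr mulmx1 /e mul_delta_mx_cond. Qed.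

Lemma sp2_coord i j k v : v \in sp2 (e i) (e j) -> k != i -> k != j -> v 0 k = 0.
Proof.
by rewrite in_sp2 => /or4P[] /eqP -> ki kj; rewrite !mxE ?eqxx /= ?(negbTE ki) ?(negbTE kj) ?addr0.
Qed.

Lemma tv_fix_out a b i j : a != b -> a != i -> a != j ->
  act (sp2 (e i) (e j)) (tvG a b) = sp2 (e i) (e j).
Proof.
move=> ab ai aj; rewrite act_sp2 tvGE // !e_tv.
by rewrite eq_sym (negbTE ai) eq_sym (negbTE aj) !addr0.
Qed.

Lemma tv_fix_in a b : a != b -> act (sp2 (e a) (e b)) (tvG a b) = sp2 (e a) (e b).
Proof.
move=> ab; rewrite act_sp2 tvGE // !e_tv eqxx eq_sym (negbTE ab) addr0 /=.
apply/setP => w; rewrite !in_sp2 -addrA addvv addr0.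
by rewrite mulr1n; case: (w == 0); case: (w == e a); case: (w == e b); case: (w == e a + e b); rewrite ?orbT.
Qed.

Lemma tv_move a b j : a != b -> b != j ->
  act (sp2 (e a) (e j)) (tvG a b) != sp2 (e a) (e j).
Proof.
move=> ab bj; apply/negP => /eqP H.
have : e a + e b \in sp2 (e a) (e j).
  by rewrite -H act_sp2 tvGE // e_tv eqxx in_sp2 eqxx /= orbT.
move/sp2_coord => /(_ b); rewrite eq_sym ab bj => /(_ isT isT).
by rewrite mxE !eE eqxx (negbTE ab) add0r; apply/eqP.
Qed.

Lemma e_neq0 i : e i != 0.
Proof. by apply/eqP => /matrixP /(_ 0 i); rewrite eE mxE eqxx; apply/eqP. Qed.

Lemma core (g : {'GL_d[F]}) a b c : a != b -> b != c -> a != c ->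
  act (sp2 (e a) (e b)) g = sp2 (e a) (e b) ->
  act (sp2 (e b) (e c)) g = sp2 (e b) (e c) -> e b *m GLval g = e b.
Proof.
move=> ab bc ac H1 H2.
set x := e b *m GLval g.
have x1 : x \in sp2 (e a) (e b) by rewrite -H1 act_sp2 in_sp2 eqxx !orbT.
have x2 : x \in sp2 (e b) (e c) by rewrite -H2 act_sp2 in_sp2 eqxx !orbT.
have xa : x 0 a = 0 by apply: sp2_coord x2 _ _ => //.
have x0 : x != 0.
  apply/eqP => /(congr1 (mulmx^~ (invmx (GLval g)))).
  have gu : GLval g \in unitmx := GL_unitmx g.
  rewrite mul0mx -mulmxA (mulmxV gu) => h.
  by move: (e_neq0 b); rewrite -[e b]mulmx1 h eqxx.
move: x1; rewrite in_sp2 (negbTE x0) /= => /or3P[] /eqP Hx //.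
  by move: xa; rewrite Hx eE eqxx => /eqP.
by move: xa; rewrite Hx !mxE !eqxx /= (negbTE ab) addr0 => /eqP.
Qed.

Lemma triv (g : {'GL_d[F]}) : (forall b, e b *m GLval g = e b) -> g = 1%g.
Proof.
move=> H; apply/val_inj => /=; apply/row_matrixP => i.
by rewrite rowE -/(e i) H rowE mulmx1.
Qed.

Local Close Scope ring_scope.

Definition E k : 'rV[F]_d := e (inord k).
Definition Q i j := sp2 (E i) (E j).
Definition W a b := tvG (inord a) (inord b).

Lemma inord_eq i j : i <= n -> j <= n -> (inord i == inord j :> 'I_d) = (i == j).
Proof. by move=> hi hj; rewrite -val_eqE /= !inordK. Qed.

Lemma W_fix a b i j : a <= n -> b <= n -> i <= n -> j <= n -> a != b ->
  ((a != i) && (a != j)) || ((b == i) || (b == j)) -> act (Q i j) (W a b) = Q i j.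
Proof.
move=> ha hb hi hj ab H.
have ab' : (inord a != inord b :> 'I_d) by rewrite inord_eq.
case/orP: H => [/andP[ai aj]|H].
  by apply: tv_fix_out; rewrite ?inord_eq.
have [ai|ai] := eqVneq a i.
  have bj : b = j by move: H; rewrite -ai [b == a]eq_sym (negbTE ab) /= => /eqP.
  by rewrite /Q /W -ai -bj; apply: tv_fix_in.
have [aj|aj] := eqVneq a j.
  have bi : b = i by move: H; rewrite -aj [b == a]eq_sym (negbTE ab) orbF => /eqP.
  by rewrite /Q /W sp2C -aj -bi; apply: tv_fix_in.
by apply: tv_fix_out; rewrite ?inord_eq.
Qed.

Lemma W_move a b i j : a <= n -> b <= n -> i <= n -> j <= n -> a != b ->
  (a == i) || (a == j) -> b != i -> b != j -> act (Q i j) (W a b) != Q i j.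
Proof.
move=> ha hb hi hj ab /orP[] /eqP ai bi bj; rewrite /Q /W.
  by rewrite -ai; apply: tv_move; rewrite ?inord_eq.
by rewrite sp2C -ai; apply: tv_move; rewrite ?inord_eq.
Qed.

Definition f m := if m < n then Q 0 m.+1 else Q (m - n).+1 (m - n).+2.
Definition w m := if m == 0 then W 1 2 else if m < n then W m.+1 1 else W (m - n).+2 0.

Lemma chain_fix m j : 2 < n -> m < n + n.-1 -> j < m -> act (f j) (w m) = f j.
Proof.
move=> hn hm hj; rewrite /f /w.
case: ifP => h1; case: ifP => h2; try case: ifP => h3; apply: W_fix; lia.
Qed.

Lemma chain_move m : 2 < n -> m < n + n.-1 -> act (f m) (w m) != f m.
Proof.
move=> hn hm; rewrite /f /w.
case: ifP => h1; case: ifP => h2; try case: ifP => h3; apply: W_move; lia.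
Qed.
End Conc.

Theorem lemma3p3 (n : nat) (hd : 4 <= n.+1) :
  ~ IBIS (GL_set_action 'F_2 n) [set: {'GL_n.+1['F_2]}] (subspaces2 'F_2 n).
Proof.
move=> HI.
have hn : 2 < n by lia.
set to := GL_set_action 'F_2 n.
set G := [set: {'GL_n.+1['F_2]}].
set Om := subspaces2 'F_2 n.
set L := map (f n) (iota 0 (n + n.-1)).
set C := map (f n) [:: 0, n.-1 & iota n n.-1].
have fOm m : m < n + n.-1 -> f n m \in Om.
  move=> hm; rewrite /f; case: ifP => h1; apply: sp2_in; rewrite inord_eq; lia.
have Lin : all (mem Om) L.
  by apply/allP => x /mapP[m]; rewrite mem_iota => hm ->; apply: fOm; lia.
have CL : {subset C <= L}.
  move=> x /mapP[m hm ->]; apply: map_f; rewrite mem_iota.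
  move: hm; rewrite !inE mem_iota; lia.
have Cin : all (mem Om) C by apply/allP => x /CL; apply: (allP Lin).
have one_in s : 1%g \in pstab to G s.
  by rewrite pstabE !inE /=; apply/allP => x _; rewrite act1.
have psC : pstab to G C = 1%g.
  apply/eqP; rewrite eqEsubset sub1set one_in andbT.
  apply/subsetP => g; rewrite pstabE => /and3P[_ _ /allP Hall]; rewrite inE; apply/eqP.
  have Hf m : m \in [:: 0, n.-1 & iota n n.-1] -> to (f n m) g = f n m.
    by move=> hm; apply/eqP/Hall; apply: map_f.
  have Hk k : k < n -> to (Q n k k.+1) g = Q n k k.+1.
    move=> hk; case: k hk => [|k] hk.
      by have := Hf 0 isT; rewrite /f ifT //; lia.
    have -> : Q n k.+1 k.+2 = f n (n + k) by rewrite /f ifF; [congr Q; lia | lia].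
    by apply: Hf; rewrite !inE mem_iota; apply/orP; right; apply/orP; right; lia.
  have H0 : to (Q n 0 n) g = Q n 0 n.
    have -> : Q n 0 n = f n n.-1 by rewrite /f ifT; [congr Q; lia | lia].
    by apply: Hf; rewrite !inE eqxx orbT.
  have H0' : to (Q n n 0) g = Q n n 0 by rewrite /Q sp2C; apply: H0.
  apply: triv => -[bb hb].
  have -> : Ordinal hb = inord bb by apply/val_inj; rewrite /= inordK.
  rewrite -/(E n bb).
  have [->|b0] := eqVneq bb 0.
    apply: (@core n g (inord n) (inord 0) (inord 1)); rewrite ?inord_eq //; try lia.
    by apply: (Hk 0); lia.
  have [->|bn] := eqVneq bb n.
    apply: (@core n g (inord n.-1) (inord n) (inord 0)); rewrite ?inord_eq //; try lia.
    have := Hk n.-1; rewrite prednK; last lia.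
    by apply; lia.
  apply: (@core n g (inord bb.-1) (inord bb) (inord bb.+1)); rewrite ?inord_eq //; try lia.
    have := Hk bb.-1; rewrite prednK; last lia.
    by apply; lia.
  by apply: Hk; lia.
have psL : pstab to G L = 1%g.
  apply/eqP; rewrite eqEsubset sub1set one_in andbT -psC.
  exact: pstab_sub.
have takeL i : i <= n + n.-1 -> take i L = map (f n) (iota 0 i).
  by move=> hi; rewrite /L -map_take take_iota; congr map; congr iota; lia.
have irrL : irredundant_base to G Om L.
  apply: irr_of_chain => // i; rewrite size_map size_iota => hi.
  rewrite !takeL; try lia.
  apply/properP; split.
    by apply: pstab_sub => x; rewrite -[i.+1]addn1 iotaD map_cat mem_cat => ->.
  exists (w n i).
    rewrite pstabE !inE /=; apply/allP => x /mapP[j]; rewrite mem_iota => hj ->.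
    by apply/eqP; apply: chain_fix; lia.
  rewrite pstabE -[i.+1]addn1 iotaD map_cat all_cat add0n.
  apply/negP => /and3P[_ _ /andP[_ /andP[Hm _]]]; move: Hm; apply/negP.
  by apply: chain_move; lia.
have [t [irrt szt]] := prune_base Cin psC.
have := HI _ _ irrt irrL; rewrite /L size_map size_iota.
move: szt; rewrite /C size_map /= size_iota.
move=> h1 h2; move: h1; rewrite h2 -!subn1 => h1.
have : n <= 2 by lia.
by rewrite leqNgt hn.
Qed.
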